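(* The graph $G_p$ is isomorphic to the Cayley graph $\mathrm{Cay}(S_4,\mathcal{C})$, where $\mathcal{C}$ is the set of elements of order exactly $2$ in the symmetric group $S_4$.
   Context: For a group $G$ and an inverse-closed subset $\mathcal{C}\subseteq G$ not containing the identity, the Cayley graph $\mathrm{Cay}(G,\mathcal{C})$ has vertex set $G$, with $g$ and $h$ adjacent iff $hg^{-1}\in\mathcal{C}$. $G_p$ is the orthogonality graph of the following 24 vectors in $\mathbb{R}^4$ (vertices are the vectors; two are adjacent iff their standard inner product is $0$): $(1,0,0,0),(0,1,0,0),(0,0,1,0),(0,0,0,1)$; $(0,1,1,0),(1,0,0,-1),(1,0,0,1),(0,1,-1,0)$; $(1,1,1,1),(1,-1,1,-1),(1,-1,-1,1),(1,1,-1,-1)$; $(1,-1,0,0),(1,1,0,0),(0,0,1,1),(0,0,1,-1)$; $(-1,1,1,1),(1,1,1,-1),(1,-1,1,1),(1,1,-1,1)$; $(1,0,1,0),(0,1,0,1),(1,0,-1,0),(0,1,0,-1)$. *)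

(* Defs.v *)
From HB Require Import structures.
From mathcomp Require Import all_boot all_order all_algebra all_fingroup.
Set Implicit Arguments. Unset Strict Implicit. Unset Printing Implicit Defensive.
Import GRing.Theory Num.Theory.
Local Open Scope ring_scope.

(* The 24 vectors of R^4 spanning G_p (all entries are integers, so we
   store them as integer 4-tuples; the standard inner product is computed
   in int, which agrees with the real inner product). *)
Definition Gp_vecs : seq (int * int * int * int) :=
  [:: (1,0,0,0); (0,1,0,0); (0,0,1,0); (0,0,0,1);
      (0,1,1,0); (1,0,0,-1); (1,0,0,1); (0,1,-1,0);
      (1,1,1,1); (1,-1,1,-1); (1,-1,-1,1); (1,1,-1,-1);
      (1,-1,0,0); (1,1,0,0); (0,0,1,1); (0,0,1,-1);
      (-1,1,1,1); (1,1,1,-1); (1,-1,1,1); (1,1,-1,1);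
      (1,0,1,0); (0,1,0,1); (1,0,-1,0); (0,1,0,-1)]%R.

Definition Gp_vec (i : 'I_24) : int * int * int * int :=
  nth (0,0,0,0) Gp_vecs i.

Definition dot4 (u v : int * int * int * int) : int :=
  let: (a1, a2, a3, a4) := u in let: (b1, b2, b3, b4) := v in
  a1 * b1 + a2 * b2 + a3 * b3 + a4 * b4.

Definition Gp_adj (i j : 'I_24) : bool := dot4 (Gp_vec i) (Gp_vec j) == 0.

Definition cayley_adj (gT : finGroupType) (C : {set gT}) (g h : gT) : bool :=
  (h * g^-1)%g \in C.

Definition S4_invol : {set 'S_4} := [set x : 'S_4 | #[x]%g == 2%N].

Definition graph_iso (V W : finType) (eV : rel V) (eW : rel W) (f : V -> W) :=
  bijective f /\ forall x y, eV x y = eW (f x) (f y).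

(* Main.v *)
Require Import Defs.
From mathcomp Require Import all_boot all_order all_algebra all_fingroup.
From mathcomp Require Import cyclic.
Definition tab : seq (seq nat) :=
 [:: [:: 0;1;2;3]; [:: 1;0;3;2]; [:: 2;3;0;1]; [:: 3;2;1;0]; [:: 0;2;1;3]; [:: 1;3;0;2];
     [:: 2;0;3;1]; [:: 3;1;2;0]; [:: 1;3;2;0]; [:: 0;2;3;1]; [:: 3;1;0;2]; [:: 2;0;1;3];
     [:: 2;3;1;0]; [:: 3;2;0;1]; [:: 0;1;3;2]; [:: 1;0;2;3]; [:: 3;0;2;1]; [:: 2;1;3;0];
     [:: 1;2;0;3]; [:: 0;3;1;2]; [:: 3;0;1;2]; [:: 2;1;0;3]; [:: 1;2;3;0]; [:: 0;3;2;1]].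
Definition Tn (x k : nat) := nth 0 (nth [::] tab x) k.
Definition GpN (x y : nat) : bool :=
  dot4 (nth (0,0,0,0)%R Gp_vecs x) (nth (0,0,0,0)%R Gp_vecs y) == 0%R.
Definition adjN x y :=
  has (fun k => Tn x k != Tn y k) (iota 0 4) &&
  all (fun k => all (fun m => (Tn x m != Tn y k) || (Tn x k == Tn y m)) (iota 0 4)) (iota 0 4).
Lemma chk : all (fun x => all (fun y => GpN x y == adjN x y) (iota 0 24)) (iota 0 24).
Proof. by vm_compute. Qed.
Lemma tabok : all (fun r => uniq r && all (fun v => v < 4) r && (size r == 4)) tab && (size tab == 24).
Proof. by vm_compute. Qed.
Lemma injN : all (fun x => all (fun y => all (fun k => Tn x k == Tn y k) (iota 0 4) ==> (x == y)) (iota 0 24)) (iota 0 24).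
Proof. by vm_compute. Qed.

Lemma rowP (x : 'I_24) : let r := nth [::] tab x in
  [/\ uniq r, all (fun v => v < 4) r & size r = 4].
Proof.
case/andP: tabok => /allP H /eqP st.
have /H/andP[/andP[u a] /eqP s] : nth [::] tab x \in tab by rewrite mem_nth // st.
by split.
Qed.

Lemma TnB (x : 'I_24) (k : 'I_4) : Tn x k < 4.
Proof.
case: (rowP x) => _ /allP a s; apply: a; rewrite /Tn mem_nth // s; exact: ltn_ord.
Qed.

Definition Tf (x : 'I_24) (k : 'I_4) : 'I_4 := inord (Tn x k).

Lemma TfE x k : val (Tf x k) = Tn x k.
Proof. exact: inordK (TnB x k). Qed.

Lemma Tinj x : injective (Tf x).
Proof.
move=> a b /(congr1 val); rewrite !TfE /Tn => e; apply/val_inj.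
case: (rowP x) => u _ s.
by apply/eqP; rewrite -(nth_uniq 0 _ _ u) ?s ?ltn_ord // e.
Qed.

Definition f (i : 'I_24) : 'S_4 := perm (@Tinj i).

Lemma fE i k : val (f i k) = Tn i k.
Proof. by rewrite permE TfE. Qed.

Lemma existsI4 (P : nat -> bool) : [exists k : 'I_4, P k] = has P (iota 0 4).
Proof.
rewrite -val_enum_ord has_map; apply/existsP/hasP => [[k Pk]|[k _ Pk]].
  by exists k; rewrite ?mem_enum.
by exists k.
Qed.

Lemma forallI4 (P : nat -> bool) : [forall k : 'I_4, P k] = all P (iota 0 4).
Proof.
rewrite -val_enum_ord all_map; apply/forallP/allP => [H k _|H k]; first exact: H.
by apply: H; rewrite mem_enum.
Qed.

Lemma sq1 (g h : 'S_4) :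
  ((h * g^-1) * (h * g^-1) == 1)%g = [forall k, forall m, (g m == h k) ==> (g k == h m)].
Proof.
apply/eqP/forallP => [E k|H].
  apply/forallP=> m; apply/implyP=> /eqP gm.
  have := congr1 (fun p : 'S_4 => p k) E; rewrite !permM perm1 -gm permK => e.
  by rewrite -{1}e permKV.
apply/permP => k; rewrite !permM perm1.
set m := g^-1%g (h k).
have : g m == h k by rewrite /m permKV.
move/(implyP (forallP (H k) m))/eqP => <-.
by rewrite permK.
Qed.

Lemma ord2 (q : 'S_4) : (#[q]%g == 2) = (q != 1%g) && (q * q == 1)%g.
Proof.
apply/idP/andP.
  move/eqP=> o; split.
    by apply/eqP => q1; rewrite q1 order1 in o.
  by apply/eqP; rewrite -(expg_order q) o expgS expg1.
case=> n1 /eqP qq.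
have d : (#[q]%g %| 2)%N by rewrite order_dvdn expgS expg1 qq.
move: (order_gt0 q) (dvdn_leq (isT : 0 < 2) d) (order_eq1 q) n1.
by case: #[q]%g => [|[|[|]]] //= _ _ <-.
Qed.

Theorem mainTheorem2 :
  exists f : 'I_24 -> 'S_4,
    graph_iso Gp_adj (cayley_adj S4_invol) f.
Proof.
exists f; split.
  apply: inj_card_bij.
    move=> x y E; apply/val_inj/eqP.
    move/allP: injN => /(_ x); rewrite mem_iota ltn_ord => /(_ isT) /allP.
    move=> /(_ y); rewrite mem_iota ltn_ord => /(_ isT) /implyP; apply.
    by apply/allP => k; rewrite mem_iota /= => kb; rewrite -[k]/(val (Ordinal kb)) -!fE E.
  by rewrite card_Sn !card_ord.
move=> x y.
have -> : Gp_adj x y = GpN x y by [].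
move/allP: chk => /(_ x); rewrite mem_iota ltn_ord => /(_ isT) /allP.
move=> /(_ y); rewrite mem_iota ltn_ord => /(_ isT) /eqP ->.
rewrite /cayley_adj /S4_invol inE ord2 sq1 -eq_mulgV1 /adjN.
congr (_ && _).
  rewrite -existsI4; apply/existsP/idP => [[k nk]|].
    by apply: contra nk => /eqP e; rewrite -!fE e.
  move=> ne; apply/existsP; apply: contraR ne; rewrite negb_exists => /forallP H.
  apply/eqP/permP => k; apply/val_inj; move: (H k); rewrite !fE negbK => /eqP.
  by move=> ->.
rewrite -forallI4; apply/forallP/forallP => H k; move: (H k).
  by rewrite -forallI4 => /forallP H2; apply/forallP => m; move: (H2 m); rewrite -!(inj_eq val_inj) !fE implybE.
move=> /forallP H2; rewrite -forallI4; apply/forallP => m; move: (H2 m).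
by rewrite -!fE !(inj_eq val_inj) implybE.
Qed.
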